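(* Let $A=(a_i)_{i\ge1}$ be a weakly increasing multisubset of $\mathbb{N}$ such that $\underline{d}(A^{\#})=1$, and let $\epsilon>0$. Then for all sufficiently large integers $h$ (depending on $\epsilon$ and $A$) there exist an integer $n$ and a set $\mathscr{J}\subseteq A^{\#}\cap[a_n,(1+\epsilon)a_n]$ such that \[ h=\sum_{i=1}^{n}a_i+\sum_{x\in\mathscr{J}}x, \] where $n$ depends on $h$ and $n\to\infty$ as $h\to\infty$.
   Context: A multisubset $A$ of $\mathbb{N}$ (positive integers) is a collection of positive integers with repetitions allowed, each integer occurring only finitely often; writing $A=(a_i)$ means $a_1\le a_2\le\cdots$ lists the elements of $A$ (with multiplicity) in non-decreasing order. $A$ is weakly increasing if for each $\epsilon>0$ there is $\delta>0$ such that $a_{\lfloor(1+\epsilon)n\rfloor}/a_n>1+\delta$ for all sufficiently large $n$ (depending on $\epsilon$). $A^{\#}\subseteq\mathbb{N}$ is the set of integers appearing at least once in $A$. For $X\subseteq\mathbb{N}$, the lower asymptotic density is $\underline{d}(X)=\liminf_{n\to\infty}|X\cap[1,n]|/n$. *)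

(* Defs.v *)
From Stdlib Require Import Reals Lra Lia List.
From Stdlib Require Import ClassicalDescription.
From Coquelicot Require Import Coquelicot.
Open Scope R_scope.

(* A multisubset A = (a_i)_{i>=1} of positive integers, listed in
   non-decreasing order; a : nat -> nat, only indices i >= 1 are used. *)
Definition is_multisubset (a : nat -> nat) : Prop :=
  (forall i, (1 <= i)%nat -> (1 <= a i)%nat) /\
  (forall i j, (1 <= i)%nat -> (i <= j)%nat -> (a i <= a j)%nat) /\
  (forall m, exists N, forall i, (N <= i)%nat -> a i <> m).

Definition nfloor (x : R) : nat := Z.to_nat (Int_part x).

Definition weakly_increasing (a : nat -> nat) : Prop :=
  forall eps : R, 0 < eps ->
  exists delta : R, 0 < delta /\
  exists N0 : nat, forall n : nat, (N0 <= n)%nat ->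
    INR (a (nfloor ((1 + eps) * INR n))) / INR (a n) > 1 + delta.

Definition inAsharp (a : nat -> nat) (m : nat) : Prop :=
  exists i, (1 <= i)%nat /\ a i = m.

Definition count_Asharp (a : nat -> nat) (n : nat) : nat :=
  length (filter (fun m => if excluded_middle_informative (inAsharp a m)
                           then true else false) (seq 1 n)).

Definition lower_density_Asharp (a : nat -> nat) : Rbar :=
  LimInf_seq (fun n => INR (count_Asharp a n) / INR n).

Definition partial_sum (a : nat -> nat) (n : nat) : nat :=
  fold_right Nat.add 0%nat (map a (seq 1 n)).

Definition list_sum (l : list nat) : nat := fold_right Nat.add 0%nat l.

(* Main.v *)
Require Import Defs.
From Stdlib Require Import Reals List.
From Coquelicot Require Import Coquelicot.
From Stdlib Require Import Lia Classical ClassicalDescription ZArith Lra IndefiniteDescription.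
Open Scope R_scope.
Open Scope R_scope.

Definition indP (P : Prop) : nat := if excluded_middle_informative P then 1%nat else 0%nat.

Fixpoint cnt (P : nat -> Prop) (u n : nat) : nat :=
  match n with O => O | S n' => (indP (P u) + cnt P (S u) n')%nat end.

Lemma ind_le1 P : (indP P <= 1)%nat.
Proof. unfold indP; destruct excluded_middle_informative; lia. Qed.

Lemma cnt_le P u n : (cnt P u n <= n)%nat.
Proof. revert u; induction n; intros u; simpl; [lia|]. pose proof (ind_le1 (P u)); specialize (IHn (S u)); lia. Qed.

Lemma cnt_or P Q u n : (cnt (fun z => P z \/ Q z) u n <= cnt P u n + cnt Q u n)%nat.
Proof.
  revert u; induction n; intros u; simpl; [lia|]. specialize (IHn (S u)).
  unfold indP; repeat destruct excluded_middle_informative; try tauto; lia.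
Qed.

Lemma cnt_mono (P Q : nat -> Prop) u n : (forall z, P z -> Q z) -> (cnt P u n <= cnt Q u n)%nat.
Proof.
  intros H; revert u; induction n; intros u; simpl; [lia|]. specialize (IHn (S u)).
  unfold indP; destruct (excluded_middle_informative (P u)) as [p|p];
  destruct (excluded_middle_informative (Q u)) as [q|q]; try lia. exfalso; apply q, H, p.
Qed.

Lemma cnt_zero (P : nat -> Prop) u n : (forall z, (u <= z)%nat -> ~ P z) -> cnt P u n = 0%nat.
Proof.
  revert u; induction n; intros u H; simpl; [lia|]. rewrite IHn by (intros; apply H; lia).
  unfold indP; destruct excluded_middle_informative as [p|]; [exfalso; apply (H u); auto|]; lia.
Qed.

Lemma cnt_eq1 y u n : (cnt (fun z => z = y) u n <= 1)%nat.
Proof.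
  revert u; induction n; intros u; simpl; [lia|].
  unfold indP at 1; destruct excluded_middle_informative as [e|ne].
  - subst. rewrite cnt_zero; [lia|]. intros; lia.
  - specialize (IHn (S u)); lia.
Qed.

Lemma cnt_last P u n : cnt P u (S n) = (cnt P u n + indP (P (u + n)%nat))%nat.
Proof.
  revert u; induction n; intros u.
  - simpl. replace (u + 0)%nat with u by lia. lia.
  - change (cnt P u (S (S n))) with (indP (P u) + cnt P (S u) (S n))%nat. rewrite IHn.
    change (cnt P u (S n)) with (indP (P u) + cnt P (S u) n)%nat.
    replace (S u + n)%nat with (u + S n)%nat by lia. lia.
Qed.

Lemma cnt_split P u n m : cnt P u (n + m) = (cnt P u n + cnt P (u + n) m)%nat.
Proof.
  revert u; induction n; intros u.
  - simpl. replace (u + 0)%nat with u by lia. lia.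
  - change (cnt P u (S n + m)) with (indP (P u) + cnt P (S u) (n + m))%nat. rewrite IHn.
    change (cnt P u (S n)) with (indP (P u) + cnt P (S u) n)%nat.
    replace (S u + n)%nat with (u + S n)%nat by lia. lia.
Qed.

Lemma cnt_compl P u n : (cnt P u n + cnt (fun z => ~ P z) u n)%nat = n.
Proof.
  revert u; induction n; intros u; simpl; [lia|]. specialize (IHn (S u)).
  unfold indP; repeat destruct excluded_middle_informative; try tauto; lia.
Qed.

Lemma cnt_refl (Q : nat -> Prop) t u n : (u + n <= t + 1)%nat ->
  cnt (fun y => Q (t - y)%nat) u n = cnt Q (t + 1 - u - n) n.
Proof.
  revert u; induction n; intros u H; [reflexivity|].
  simpl cnt at 1. rewrite IHn by lia. rewrite cnt_last.
  replace (t + 1 - S u - n)%nat with (t + 1 - u - S n)%nat by lia.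
  replace (t + 1 - u - S n + n)%nat with (t - u)%nat by lia. lia.
Qed.

Lemma cnt_sub P u n u' n' : (u <= u')%nat -> (u' + n' <= u + n)%nat -> (cnt P u' n' <= cnt P u n)%nat.
Proof.
  intros H1 H2.
  replace n with ((u' - u) + (n' + (u + n - u' - n')))%nat by lia.
  rewrite cnt_split, cnt_split. replace (u + (u' - u))%nat with u' by lia. lia.
Qed.

Lemma cnt_exists P u n : (cnt P u n < n)%nat -> exists y, (u <= y < u + n)%nat /\ ~ P y.
Proof.
  revert u; induction n; intros u H; simpl in H; [lia|].
  unfold indP in H; destruct excluded_middle_informative as [p|np].
  - destruct (IHn (S u)) as [y [Hy Py]]; [lia|]. exists y; split; auto; lia.
  - exists u; split; auto; lia.
Qed.

Definition missing (B : nat -> Prop) (x L M : nat) : Prop :=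
  forall u n, (x <= u)%nat -> (u + n <= x + L + 1)%nat -> (cnt (fun z => ~ B z) u n <= M)%nat.

Fixpoint G (j M : nat) : nat :=
  match j with O => (4 * M + 1)%nat | S j' => (G j' (S M) + M + 1)%nat end.

Lemma G_ge1 j M : (1 <= G j M)%nat.
Proof. revert M; induction j; intros; simpl; [lia|]. specialize (IHj (S M)); lia. Qed.

Lemma G_bound j M : (G j M <= (j + 4) * (M + j + 2))%nat.
Proof. revert M; induction j; intros; simpl; [lia|]. specialize (IHj (S M)); nia. Qed.

Lemma comb j : forall (B : nat -> Prop) x L M t,
  missing B x L M -> (2 * G j M <= L)%nat ->
  ((j + 2) * x + G j M <= t)%nat -> (t + G j M <= (j + 2) * (x + L))%nat ->
  exists l, NoDup l /\ (forall z, In z l -> B z /\ (x <= z <= x + L)%nat) /\ list_sum l = t.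
Proof.
  induction j; intros B x L M t HB HL Ht1 Ht2; simpl G in *.
  - set (p := Nat.max x (t - x - L)).
    assert (Hc : (cnt (fun y => ~ B y \/ ~ B (t - y)%nat) p (2 * M + 1) < 2 * M + 1)%nat).
    { eapply Nat.le_lt_trans; [apply cnt_or|].
      rewrite (cnt_refl (fun z => ~ B z)) by lia.
      assert (cnt (fun z => ~ B z) p (2 * M + 1) <= M)%nat by (apply HB; lia).
      assert (cnt (fun z => ~ B z) (t + 1 - p - (2 * M + 1)) (2 * M + 1) <= M)%nat by (apply HB; lia).
      lia. }
    destruct (cnt_exists _ _ _ Hc) as [y [Hy Hny]].
    apply not_or_and in Hny; destruct Hny as [B1 B2]; apply NNPP in B1; apply NNPP in B2.
    exists (y :: (t - y)%nat :: nil). split; [|split].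
    + constructor; [simpl; intros [E|[]]; lia|]. constructor; [simpl; tauto|constructor].
    + simpl; intros z [E|[E|[]]]; subst; split; auto; lia.
    + simpl. lia.
  - set (c := G j (S M)) in *.
    pose proof (G_ge1 j (S M)) as Hc1. fold c in Hc1.
    set (X1 := ((j + 2) * x)%nat) in *.
    set (X2 := ((j + 2) * (x + L))%nat) in *.
    assert (E1 : ((S j + 2) * x = X1 + x)%nat) by (unfold X1; nia).
    assert (E2 : ((S j + 2) * (x + L) = X2 + x + L)%nat) by (unfold X2; nia).
    assert (E3 : (X2 >= X1 + L)%nat) by (unfold X1, X2; nia).
    rewrite E1 in Ht1; rewrite E2 in Ht2.
    set (p := Nat.min (x + L - M) (Nat.max x (t - X1 - c - M))).
    assert (Hc : (cnt (fun z => ~ B z) p (M + 1) < M + 1)%nat).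
    { assert (cnt (fun z => ~ B z) p (M + 1) <= M)%nat by (apply HB; lia). lia. }
    destruct (cnt_exists _ _ _ Hc) as [y [Hy Hny]]. apply NNPP in Hny.
    assert (Hyt : (y <= t)%nat) by lia.
    destruct (IHj (fun z => B z /\ z <> y) x L (S M) (t - y)%nat) as [l [Hl1 [Hl2 Hl3]]].
    + intros u n Hu Hn. eapply Nat.le_trans.
      { apply (cnt_mono _ (fun z => ~ B z \/ z = y)). intros z Hz.
        destruct (classic (z = y)); [tauto|]. left; tauto. }
      eapply Nat.le_trans; [apply cnt_or|]. pose proof (cnt_eq1 y u n).
      specialize (HB u n Hu Hn). lia.
    + lia.
    + fold c X1. lia.
    + fold c X2. lia.
    + exists (y :: l). split; [|split].
      * constructor; auto. intros Hin; apply Hl2 in Hin; tauto.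
      * simpl; intros z [E|Hin]; [subst; split; auto; lia|]. apply Hl2 in Hin; tauto.
      * simpl. unfold list_sum in *. lia.
Qed.

Open Scope Z_scope.
Lemma arithZ (E x x' L L' M M' G G' d : Z) :
  0 <= x -> 0 <= x' -> 0 <= L -> 0 <= L' -> 0 <= M -> 0 <= M' -> 0 <= G -> 0 <= G' -> 0 <= d ->
  1 <= E -> 100000 * E * E * E <= x -> E * L <= x -> x < E * L + E ->
  E * L' <= x' -> x <= x' -> x' <= x + 1 + d -> 1000 * E * E * d <= x' ->
  1000 * E * E * M <= x + L -> 1000 * E * E * M' <= x' + L' ->
  G <= (2 * E + 4) * (M + 2 * E + 2) -> G' <= (2 * E + 4) * (M' + 2 * E + 2) ->
  2 * G <= L /\ (2 * E + 3) * x' + G' + G <= (2 * E + 2) * (x + L) + 1.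
Proof.
  intros Hx0 Hx'0 HL0 HL'0 HM0 HM'0 HG0 HG'0 Hd0 HE Hx HL1 HL2 HL'1 Hxx' Hd1 Hd2 HM HM' HG HG'.
  assert (HE2 : 1 <= E * E) by (clear - HE; nia).
  assert (HE3 : 1 <= E * E * E) by (clear - HE HE2; nia).
  assert (s1 : L <= x) by (clear - HE HL1 HL0; nia).
  assert (s1' : L' <= x') by (clear - HE HL'1 HL'0; nia).
  assert (f3 : E <= E * E) by (clear -HE; nia).
  assert (f4 : E * E <= E * E * E) by (clear -HE HE2; nia).
  assert (f5 : 1000 <= 1000 * E * E) by (clear -HE2; nia).
  assert (s3 : x' <= 2 * x) by (clear - Hx Hxx' Hd1 Hd2 HE3 f5 Hd0; nia).
  assert (s2 : 500 * (E * E * M) <= x) by (clear -HM s1; lia).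
  assert (s4 : 250 * (E * E * M') <= x) by (clear -HM' s1' s3; lia).
  assert (f1 : M <= E * M) by (clear -HE HM0; nia).
  assert (f2 : M' <= E * M') by (clear -HE HM'0; nia).
  assert (s5 : G <= 6 * (E * M) + 24 * (E * E)) by (clear -HG f1 f3 HE; nia).
  assert (s6 : G' <= 6 * (E * M') + 24 * (E * E)) by (clear -HG' f2 f3 HE; nia).
  assert (s5' : 500 * (E * G) <= 6 * x + 12000 * (E * E * E)) by (clear -s5 s2 HE; nia).
  assert (s6' : 250 * (E * G') <= 6 * x + 6000 * (E * E * E)) by (clear -s6 s4 HE; nia).
  assert (s7 : 2 * (E * G) <= E * L) by (clear -s5' Hx HL2 HE; nia).
  split; [clear -s7 HE HG0 HL0; nia|].
  assert (f6 : E * d <= E * E * d) by (clear -HE Hd0; nia).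
  assert (s9 : 100 * (5 * (E * d)) <= x) by (clear -f6 Hd2 s3; lia).
  assert (f7 : G <= E * G) by (clear -HE HG0; nia).
  assert (f8 : G' <= E * G') by (clear -HE HG'0; nia).
  assert (s10 : 100 * (G + G') <= 4 * x + 4800 * (E * E * E)) by (clear -f7 f8 s5' s6' Hx0 HE3; lia).
  assert (f9 : (2 * E + 3) * d <= 5 * (E * d)) by (clear -HE Hd0; nia).
  assert (s11 : (2 * E + 3) * x' <= (2 * E + 3) * x + (2 * E + 3) + 5 * (E * d)) by (clear -f9 Hd1 HE Hx'0 Hd0; nia).
  assert (s12 : (2 * E + 2) * x + 2 * x - 2 * E <= (2 * E + 2) * (x + L) + 1) by (clear -HL2 HE HL0 Hx0; nia).
  assert (f10 : 7 * E <= 7 * (E * E * E)) by (clear -f3 f4; lia).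
  clear -s9 s10 s11 s12 f10 Hx HE3. nia.
Qed.

Open Scope R_scope.

Open Scope R_scope.
Open Scope R_scope.

Lemma arith (E x x' L L' M M' G G' d : nat) :
  (1 <= E)%nat -> (100 * 1000 * E * E * E <= x)%nat -> (E * L <= x)%nat -> (x < E * L + E)%nat ->
  (E * L' <= x')%nat -> (x <= x')%nat -> (x' <= x + 1 + d)%nat -> (10 * 10 * 10 * E * E * d <= x')%nat ->
  (10 * 10 * 10 * E * E * M <= x + L)%nat -> (10 * 10 * 10 * E * E * M' <= x' + L')%nat ->
  (G <= (2 * E + 4) * (M + 2 * E + 2))%nat -> (G' <= (2 * E + 4) * (M' + 2 * E + 2))%nat ->
  (2 * G <= L)%nat /\ ((2 * E + 3) * x' + G' + G <= (2 * E + 2) * (x + L) + 1)%nat.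
Proof.
  intros. 
  destruct (arithZ (Z.of_nat E) (Z.of_nat x) (Z.of_nat x') (Z.of_nat L) (Z.of_nat L')
    (Z.of_nat M) (Z.of_nat M') (Z.of_nat G) (Z.of_nat G') (Z.of_nat d)); try lia.
Qed.

Lemma count_eq a u n :
  length (filter (fun m => if excluded_middle_informative (inAsharp a m) then true else false) (seq u n))
  = cnt (inAsharp a) u n.
Proof.
  revert u; induction n; intros u; [reflexivity|].
  simpl. unfold indP. destruct (excluded_middle_informative (inAsharp a u)); simpl; rewrite IHn; reflexivity.
Qed.

Lemma density a (hd : lower_density_Asharp a = Finite 1) (D : nat) : (1 <= D)%nat ->
  exists N1, forall m, (N1 <= m)%nat -> (D * cnt (fun z => ~ inAsharp a z) 1 m <= m)%nat.
Proof.
  intros HD.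
  destruct (ex_LimInf_seq (fun n => INR (count_Asharp a n) / INR n)) as [l Hl].
  pose proof (is_LimInf_seq_unique _ _ Hl) as Hu. unfold lower_density_Asharp in hd.
  rewrite Hu in hd. subst l. simpl in Hl.
  assert (HDp : 0 < INR D) by (apply lt_0_INR; lia).
  destruct (Hl (mkposreal (/ INR D) (Rinv_0_lt_compat _ HDp))) as [_ [N HN]].
  exists (Nat.max N 1). intros m Hm. specialize (HN m ltac:(lia)). simpl in HN.
  assert (Hmp : 0 < INR m) by (apply lt_0_INR; lia).
  set (c := count_Asharp a m) in *.
  assert (H2 : INR m * INR D - INR m < INR c * INR D).
  { assert (H := Rmult_lt_compat_r (INR m * INR D) _ _ ltac:(nra) HN).
    replace ((1 - / INR D) * (INR m * INR D)) with (INR m * INR D - INR m) in H by (field; lra).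
    replace (INR c / INR m * (INR m * INR D)) with (INR c * INR D) in H by (field; lra). exact H. }
  assert (H3 : (m * D < c * D + m)%nat).
  { apply INR_lt. rewrite plus_INR, !mult_INR. lra. }
  pose proof (cnt_compl (inAsharp a) 1 m) as Hc.
  unfold c, count_Asharp in H3. rewrite count_eq in H3. nia.
Qed.

Lemma tends a : (forall m, exists N, forall i, (N <= i)%nat -> a i <> m) ->
  forall X, exists n0, forall n, (n0 <= n)%nat -> (X <= a n)%nat.
Proof.
  intros hfin X; induction X.
  - exists 0%nat; intros; lia.
  - destruct IHX as [n0 Hn0]. destruct (hfin X) as [N HN].
    exists (Nat.max n0 N). intros n Hn. specialize (Hn0 n ltac:(lia)). specialize (HN n ltac:(lia)). lia.
Qed.

Lemma fr_add l c : fold_right Nat.add c l = (fold_right Nat.add 0 l + c)%nat.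
Proof. induction l; simpl; lia. Qed.

Lemma ps_S a n : partial_sum a (S n) = (partial_sum a n + a (S n))%nat.
Proof.
  unfold partial_sum. rewrite seq_S, map_app, fold_right_app. simpl.
  rewrite fr_add. replace (1 + n)%nat with (S n) by lia. lia.
Qed.

Lemma ps_ge a : (forall i, (1 <= i)%nat -> (1 <= a i)%nat) -> forall n, (n <= partial_sum a n)%nat.
Proof.
  intros hpos n; induction n; [simpl; lia|]. rewrite ps_S. specialize (hpos (S n) ltac:(lia)). lia.
Qed.

Lemma max_exists (P : nat -> Prop) b : (forall m, P m -> (m <= b)%nat) -> (exists m, P m) ->
  exists n, P n /\ forall m, P m -> (m <= n)%nat.
Proof.
  revert P; induction b; intros P Hb [m0 Hm0].
  - exists 0%nat. assert (m0 = 0)%nat by (apply Hb in Hm0; lia). subst. split; auto.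
  - destruct (classic (P (S b))) as [HS|HS].
    + exists (S b); split; auto.
    + apply IHb; [|eauto]. intros m Pm. specialize (Hb m Pm).
      destruct (Nat.eq_dec m (S b)); [subst; contradiction|lia].
Qed.

Lemma cnt_all (P : nat -> Prop) u n : (forall z, (u <= z < u + n)%nat -> P z) -> cnt P u n = n.
Proof.
  revert u; induction n; intros u H; [reflexivity|]. simpl. rewrite IHn by (intros; apply H; lia).
  unfold indP; destruct excluded_middle_informative as [|np]; [lia|]. exfalso; apply np, H; lia.
Qed.

Lemma gap a D N1 (hmono : forall i j, (1 <= i)%nat -> (i <= j)%nat -> (a i <= a j)%nat)
  (HN1 : forall m, (N1 <= m)%nat -> (D * cnt (fun z => ~ inAsharp a z) 1 m <= m)%nat)
  n : (1 <= n)%nat -> (N1 <= a n)%nat -> (D * (a (S n) - 1 - a n) <= a (S n))%nat.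
Proof.
  intros Hn HaN.
  destruct (le_lt_dec (a (S n)) (a n)) as [Hle|Hlt].
  { replace (a (S n) - 1 - a n)%nat with 0%nat by lia. lia. }
  set (m := (a (S n) - 1)%nat).
  specialize (HN1 m ltac:(unfold m; lia)).
  assert (Hall : cnt (fun z => ~ inAsharp a z) (a n + 1) (m - a n) = (m - a n)%nat).
  { apply cnt_all. intros z Hz [i [Hi Hai]]. unfold m in Hz.
    destruct (le_lt_dec i n) as [Hin|Hin].
    - specialize (hmono i n Hi Hin). lia.
    - specialize (hmono (S n) i ltac:(lia) Hin). lia. }
  pose proof (cnt_sub (fun z => ~ inAsharp a z) 1 m (a n + 1) (m - a n) ltac:(lia) ltac:(unfold m in *; lia)).
  rewrite Hall in H. unfold m in *. nia.
Qed.

Lemma missing_A a D N1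
  (HN1 : forall m, (N1 <= m)%nat -> (D * cnt (fun z => ~ inAsharp a z) 1 m <= m)%nat)
  x L : (1 <= D)%nat -> (1 <= x)%nat -> (N1 <= x + L)%nat -> missing (inAsharp a) x L ((x + L) / D).
Proof.
  intros HD Hx HN u n Hu Hn.
  eapply Nat.le_trans; [apply (cnt_sub _ 1 (x + L)); lia|].
  apply Nat.div_le_lower_bound; [lia|]. apply HN1; lia.
Qed.

Open Scope R_scope.

Lemma real_bound (E x z : nat) (eps : R) : (0 < E)%nat -> / INR E < eps ->
  (z <= x + x / E)%nat -> INR z <= (1 + eps) * INR x.
Proof.
  intros HE HE2 Hz.
  pose proof (Nat.div_mod x E ltac:(lia)) as Hdm.
  assert (H1 : (E * (x / E) <= x)%nat) by lia.
  apply le_INR in H1. rewrite mult_INR in H1. apply le_INR in Hz. rewrite plus_INR in Hz.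
  assert (He : 0 < INR E) by (apply lt_0_INR; lia).
  assert (Hi : INR E * / INR E = 1) by (field; lra).
  assert (0 < / INR E) by (apply Rinv_0_lt_compat; lra).
  pose proof (pos_INR x). pose proof (pos_INR (x / E)).
  assert (INR (x / E) <= eps * INR x) by nra.
  lra.
Qed.

Theorem lemma4p2 (a : nat -> nat)
  (hA : is_multisubset a) (hwi : weakly_increasing a)
  (hd : lower_density_Asharp a = Finite 1)
  (eps : R) (heps : 0 < eps) :
  exists (H : nat) (N : nat -> nat) (J : nat -> list nat),
    (forall h : nat, (H <= h)%nat ->
       NoDup (J h) /\
       (forall x, In x (J h) ->
          inAsharp a x /\ (a (N h) <= x)%nat /\
          INR x <= (1 + eps) * INR (a (N h))) /\
       h = (partial_sum a (N h) + list_sum (J h))%nat) /\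
    (forall M : nat, exists H' : nat, forall h : nat,
       (H' <= h)%nat -> (M <= N h)%nat).
Proof.
  destruct hA as [hpos [hmono hfin]].
  destruct (archimed_cor1 eps heps) as [E [HE1 HE2]].
  set (D := (10 * 10 * 10 * E * E)%nat).
  destruct (density a hd D ltac:(unfold D; nia)) as [N1 HN1].
  set (j := (2 * E)%nat).
  set (Ln := fun n => (a n / E)%nat).
  set (Mn := fun n => ((a n + Ln n) / D)%nat).
  set (Gn := fun n => G j (Mn n)).
  set (lo := fun n => (partial_sum a n + (j + 2) * a n + Gn n)%nat).
  set (hi := fun n => (partial_sum a n + (j + 2) * (a n + Ln n) - Gn n)%nat).
  destruct (tends a hfin (100 * 1000 * E * E * E + N1 + 1)) as [n0 Hn0].
  set (n1 := Nat.max n0 1).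
  assert (Key : forall n, (n1 <= n)%nat -> (2 * Gn n <= Ln n)%nat /\ (lo (S n) <= hi n + 1)%nat).
  { intros n Hn. specialize (Hn0 n ltac:(unfold n1 in Hn; lia)) as Hx.
    pose proof (Hn0 (S n) ltac:(unfold n1 in Hn; lia)) as Hx'.
    pose proof (gap a D N1 hmono HN1 n ltac:(unfold n1 in Hn; lia) ltac:(lia)) as Hgap.
    pose proof (Nat.div_mod (a n) E ltac:(lia)) as Hdm1.
    pose proof (Nat.mod_upper_bound (a n) E ltac:(lia)) as Hdm2.
    pose proof (Nat.div_mod (a (S n)) E ltac:(lia)) as Hdm3.
    pose proof (Nat.mul_div_le (a n + Ln n) D) as HM1.
    pose proof (Nat.mul_div_le (a (S n) + Ln (S n)) D) as HM2.
    pose proof (G_bound j (Mn n)) as HG1.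
    pose proof (G_bound j (Mn (S n))) as HG2.
    pose proof (hmono n (S n) ltac:(unfold n1 in Hn; lia) ltac:(lia)) as Hmn.
    assert (Hk1 : (1 <= E)%nat) by lia.
    assert (Hk2 : (100 * 1000 * E * E * E <= a n)%nat) by (clear -Hx; lia).
    unfold Gn, Mn, Ln, D, j in *; cbv beta in *.
    set (x := a n) in *. set (x' := a (S n)) in *.
    destruct (arith E x x' (x / E) (x' / E) ((x + x / E) / (10 * 10 * 10 * E * E))
      ((x' + x' / E) / (10 * 10 * 10 * E * E)) (G (2 * E) ((x + x / E) / (10 * 10 * 10 * E * E)))
      (G (2 * E) ((x' + x' / E) / (10 * 10 * 10 * E * E))) (x' - 1 - x)) as [A1 A2].
    - exact Hk1.
    - exact Hk2.
    - clear -Hdm1; lia.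
    - clear -Hdm1 Hdm2; lia.
    - clear -Hdm3; lia.
    - exact Hmn.
    - clear; lia.
    - exact Hgap.
    - apply HM1; clear -Hk1; nia.
    - apply HM2; clear -Hk1; nia.
    - clear -HG1; replace (2 * E + 4)%nat with (2 * E + 4)%nat in HG1; lia.
    - clear -HG2; lia.
    - split; [exact A1|]. unfold lo, hi, Gn, Mn, Ln, D, j; cbv beta. rewrite ps_S.
      change (a (S n)) with x'. change (a n) with x.
      set (g1 := G (2 * E) ((x + x / E) / (10 * 10 * 10 * E * E))) in *.
      set (g2 := G (2 * E) ((x' + x' / E) / (10 * 10 * 10 * E * E))) in *.
      set (q := (x / E)%nat) in *. set (P := partial_sum a n).
      clear -A1 A2. nia. }
  assert (Miss : forall n, (n1 <= n)%nat -> missing (inAsharp a) (a n) (Ln n) (Mn n)).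
  { intros n Hn. specialize (Hn0 n ltac:(unfold n1 in Hn; lia)).
    apply (missing_A a D N1 HN1); [unfold D; nia | lia | lia]. }
  set (H := lo n1).
  assert (Hex : forall h, exists p : nat * list nat, ((H <= h) ->
     (n1 <= fst p)%nat /\ (forall m, (n1 <= m)%nat -> (lo m <= h)%nat -> (m <= fst p)%nat) /\
     NoDup (snd p) /\
     (forall z, In z (snd p) -> inAsharp a z /\ (a (fst p) <= z <= a (fst p) + Ln (fst p))%nat) /\
     h = (partial_sum a (fst p) + list_sum (snd p)))%nat).
  { intros h. destruct (le_lt_dec H h) as [Hh|Hh]; [|exists (0%nat, nil); intros; lia].
    destruct (max_exists (fun m => (n1 <= m)%nat /\ (lo m <= h)%nat) h) as [n [[Hn1 Hlo] Hmax]].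
    - intros m [_ Hm]. unfold lo in Hm. pose proof (ps_ge a hpos m). lia.
    - exists n1; split; [lia|exact Hh].
    - destruct (Key n Hn1) as [K1 K2].
      assert (Hhi : (h <= hi n)%nat).
      { destruct (le_lt_dec h (hi n)) as [|Hc]; [assumption|].
        assert (S n <= n)%nat by (apply Hmax; split; lia). lia. }
      unfold lo, hi, Gn in *.
      destruct (comb j (inAsharp a) (a n) (Ln n) (Mn n) (h - partial_sum a n)%nat (Miss n Hn1) K1)
        as [l [Hl1 [Hl2 Hl3]]]; [lia|lia|].
      exists (n, l). intros _. simpl. split; [lia|]. split; [intros m Hm1 Hm2; apply Hmax; auto|].
      split; [exact Hl1|]. split; [exact Hl2|]. lia. }
  exists H, (fun h => fst (proj1_sig (constructive_indefinite_description _ (Hex h)))),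
    (fun h => snd (proj1_sig (constructive_indefinite_description _ (Hex h)))).
  split.
  - intros h Hh. destruct (constructive_indefinite_description _ (Hex h)) as [[n l] Hp]. simpl.
    destruct (Hp Hh) as [_ [_ [P1 [P2 P3]]]]. cbn [fst snd] in P1, P2, P3.
    split; [exact P1|]. split; [|exact P3].
    intros z Hz. destruct (P2 z Hz) as [Q1 Q2]. split; [exact Q1|]. split; [lia|].
    apply (real_bound E); auto. unfold Ln in Q2. lia.
  - intros M. exists (Nat.max H (lo (Nat.max M n1))). intros h Hh.
    destruct (constructive_indefinite_description _ (Hex h)) as [[n l] Hp]. simpl.
    destruct (Hp ltac:(lia)) as [_ [P0 _]]. simpl in P0.
    assert (Nat.max M n1 <= n)%nat by (apply P0; lia). lia.
Qed.
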